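(* For every $\alpha\in[m,M]$, with $E_\alpha=\{x\in[s^{-1},1):\lambda(x)\le\alpha\}$, the function $x\mapsto \mathds{1}_{E_\alpha}(x)/x$ is Riemann integrable on $[s^{-1},1]$.
   Context: Fix integers $p\ge 3$ and $2\le s<p$, and a set $A\subset\{0,1,\dots,p-1\}$ with $\#A=s$. Let $h:\{0,1,\dots,s-1\}\to A$ be the unique strictly increasing bijection. For a positive integer $n$ with base-$s$ expansion $n=\sum_{i=0}^k\varepsilon_i s^i$ ($\varepsilon_i\in\{0,\dots,s-1\}$, $\varepsilon_k\ne 0$), put $a_n=\sum_{i=0}^k h(\varepsilon_i)p^i$, and put $a_0=h(0)$. Let $b_n=a_n/n^{\log_s p}$ for $n\ge1$, $m=\inf_{n\ge1}b_n$, $M=\sup_{n\ge1}b_n$. For real $x\ge0$ let $a(x)=a_{\lfloor x\rfloor}$, and for $x>0$ let $\lambda(x)=\lim_{k\to\infty}\frac{a(s^kx)}{(s^kx)^{\log_s p}}$ (this limit exists). $\mathds{1}_E$ denotes the indicator function of $E$ (extended by $0$ at $x=1$). *)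

(* Defs.v *)
From Stdlib Require Import Reals Lra Lia Arith List Sorted ClassicalEpsilon.
From Coquelicot Require Import Coquelicot.
Open Scope R_scope.

(* The digit set A is given as its strictly increasing enumeration (a list);
   then h(i) = i-th element of A is the unique increasing bijection {0..s-1} -> A. *)
Definition hdig (A : list nat) (i : nat) : nat := nth i A 0%nat.

(* a_n for n >= 1 via base-s digits (fuel-based recursion; fuel n suffices). *)
Fixpoint a_aux (s p : nat) (A : list nat) (fuel n : nat) : nat :=
  match fuel with
  | O => O
  | S f => if Nat.eqb n 0 then O
           else (hdig A (n mod s) + p * a_aux s p A f (n / s))%nat
  end.

Definition aseq (s p : nat) (A : list nat) (n : nat) : nat :=
  if Nat.eqb n 0 then hdig A 0 else a_aux s p A n n.

Definition logsp (s p : nat) : R := ln (INR p) / ln (INR s).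

Definition bseq (s p : nat) (A : list nat) (n : nat) : R :=
  INR (aseq s p A n) / Rpower (INR n) (logsp s p).

Definition bset (s p : nat) (A : list nat) (y : R) : Prop :=
  exists n : nat, (1 <= n)%nat /\ y = bseq s p A n.

Definition mInf (s p : nat) (A : list nat) : Rbar := Glb_Rbar (bset s p A).
Definition MSup (s p : nat) (A : list nat) : Rbar := Lub_Rbar (bset s p A).

Definition areal (s p : nat) (A : list nat) (x : R) : R :=
  INR (aseq s p A (Z.to_nat (Int_part x))).

Definition lambda (s p : nat) (A : list nat) (x : R) : R :=
  real (Lim_seq (fun k : nat =>
    areal s p A (INR s ^ k * x) / Rpower (INR s ^ k * x) (logsp s p))).

Definition E_alpha (s p : nat) (A : list nat) (alpha x : R) : Prop :=
  / INR s <= x < 1 /\ lambda s p A x <= alpha.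

Definition indic_over_x (s p : nat) (A : list nat) (alpha : R) (x : R) : R :=
  if excluded_middle_informative (E_alpha s p A alpha x) then / x else 0.

(* Main.v *)
Require Import Defs.
From Stdlib Require Import Reals List Sorted Lra Lia Arith Classical ClassicalEpsilon.
From Coquelicot Require Import Coquelicot.
Open Scope R_scope.

Section NatPart.
Local Open Scope nat_scope.

Lemma a_aux_fuel (s p : nat) (A : list nat) : (2 <= s)%nat ->
  forall f1 f2 n, (n <= f1)%nat -> (n <= f2)%nat -> a_aux s p A f1 n = a_aux s p A f2 n.
Proof.
  intros Hs f1; induction f1 as [|f1 IH]; intros f2 n H1 H2.
  - assert (n = 0%nat) by lia; subst. destruct f2; reflexivity.
  - destruct f2 as [|f2].
    + assert (n = 0%nat) by lia; subst. reflexivity.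
    + simpl. destruct (Nat.eqb n 0) eqn:E; [reflexivity|].
      apply Nat.eqb_neq in E.
      assert (n / s < n)%nat by (apply Nat.div_lt; lia).
      rewrite (IH f2 (n / s)%nat) by lia. reflexivity.
Qed.

Lemma aseq_rec (s p : nat) (A : list nat) : (2 <= s)%nat ->
  forall N, (1 <= N / s)%nat ->
  aseq s p A N = (hdig A (N mod s) + p * aseq s p A (N / s))%nat.
Proof.
  intros Hs N HN.
  assert (HN1 : (1 <= N)%nat).
  { destruct N; [rewrite Nat.div_0_l in HN; lia | lia]. }
  assert (N / s < N)%nat by (apply Nat.div_lt; lia).
  unfold aseq. destruct (Nat.eqb N 0) eqn:E1; [apply Nat.eqb_eq in E1; lia|].
  destruct (Nat.eqb (N / s) 0) eqn:E2; [apply Nat.eqb_eq in E2; lia|].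
  destruct N as [|N']; [lia|]. simpl a_aux at 1.
  change (Nat.eqb (S N') 0) with false. cbv beta iota. f_equal. f_equal. apply a_aux_fuel; lia.
Qed.

Lemma aseq_small (s p : nat) (A : list nat) : forall k, (1 <= k)%nat -> (k < s)%nat ->
  aseq s p A k = hdig A k.
Proof.
  intros k H1 H2. unfold aseq.
  destruct (Nat.eqb k 0) eqn:E1; [apply Nat.eqb_eq in E1; lia|].
  destruct k as [|k']; [lia|]. simpl a_aux. change (Nat.eqb (S k') 0) with false. cbv beta iota.
  rewrite Nat.mod_small by lia. rewrite Nat.div_small by lia.
  destruct k'; simpl; lia.
Qed.

Lemma hdig_lt (p s : nat) (A : list nat) : List.length A = s ->
  List.Forall (fun a => (a < p)%nat) A -> forall d, (d < s)%nat -> (hdig A d < p)%nat.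
Proof.
  intros HL HF d Hd. unfold hdig.
  rewrite Forall_forall in HF. apply HF. apply nth_In. lia.
Qed.

Lemma aseq_block (p s : nat) (A : list nat) : (2 <= s)%nat -> List.length A = s ->
  List.Forall (fun a => (a < p)%nat) A -> forall m k N, (1 <= k)%nat ->
  (k * s ^ m <= N)%nat -> (N < (k + 1) * s ^ m)%nat ->
  (p ^ m * aseq s p A k <= aseq s p A N)%nat /\
  (aseq s p A N < p ^ m * (aseq s p A k + 1))%nat.
Proof.
  intros Hs HL HF m; induction m as [|m IH]; intros k N Hk H1 H2.
  - simpl in *. assert (N = k) by lia. subst. lia.
  - assert (Hq1 : (k * s ^ m <= N / s)%nat).
    { apply Nat.div_le_lower_bound; [lia|]. simpl in H1. nia. }
    assert (Hq2 : (N / s < (k + 1) * s ^ m)%nat).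
    { apply Nat.div_lt_upper_bound; [lia|]. simpl in H2. nia. }
    destruct (IH k (N / s) Hk Hq1 Hq2) as [IH1 IH2].
    assert (Hsm : (1 <= s ^ m)%nat) by (apply Nat.le_succ_l, Nat.neq_0_lt_0, Nat.pow_nonzero; lia).
    rewrite (aseq_rec s p A Hs N) by nia.
    assert (Hd : (hdig A (N mod s) < p)%nat) by (apply (hdig_lt p s); auto; apply Nat.mod_upper_bound; lia).
    simpl. split; nia.
Qed.

End NatPart.

Lemma Int_part_charac (y : R) (z : Z) : IZR z <= y < IZR z + 1 -> Int_part y = z.
Proof.
  intros [H1 H2]. unfold Int_part.
  assert (up y = (z + 1)%Z).
  { symmetry. apply tech_up; rewrite plus_IZR; simpl; lra. }
  rewrite H. lia.
Qed.

Lemma Rpower_S_c (s p : nat) : (2 <= s)%nat -> (1 <= p)%nat ->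
  Rpower (INR s) (logsp s p) = INR p.
Proof.
  intros Hs Hp. unfold Rpower, logsp.
  assert (1 < INR s) by (apply lt_1_INR; lia).
  assert (0 < INR p) by (apply lt_0_INR; lia).
  assert (0 < ln (INR s)) by (rewrite <- ln_1; apply ln_increasing; lra).
  replace (ln (INR p) / ln (INR s) * ln (INR s)) with (ln (INR p)) by (field; lra).
  apply exp_ln; lra.
Qed.

Lemma Rpower_scale (s p : nat) : (2 <= s)%nat -> (1 <= p)%nat ->
  forall N x, 0 < x ->
  Rpower (INR s ^ N * x) (logsp s p) = INR p ^ N * Rpower x (logsp s p).
Proof.
  intros Hs Hp N x Hx.
  assert (1 < INR s) by (apply lt_1_INR; lia).
  assert (0 < INR p) by (apply lt_0_INR; lia).
  rewrite <- Rpower_mult_distr by (try apply pow_lt; lra).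
  f_equal.
  rewrite <- (Rpower_pow N (INR s)) by lra.
  rewrite Rpower_mult. rewrite Rmult_comm. rewrite <- Rpower_mult.
  rewrite Rpower_S_c by auto. apply Rpower_pow; lra.
Qed.

Lemma floor_block (s : nat) : (2 <= s)%nat -> forall n m k x,
  INR k / INR s ^ n <= x < INR (k + 1) / INR s ^ n ->
  exists N, Z.to_nat (Int_part (INR s ^ (n + m) * x)) = N /\
    (k * s ^ m <= N)%nat /\ (N < (k + 1) * s ^ m)%nat.
Proof.
  intros Hs n m k x [H1 H2].
  assert (1 < INR s) by (apply lt_1_INR; lia).
  assert (Hsn : 0 < INR s ^ n) by (apply pow_lt; lra).
  assert (Hsm : 0 < INR s ^ m) by (apply pow_lt; lra).
  set (y := INR s ^ (n + m) * x).
  assert (Hy1 : INR k * INR s ^ m <= y).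
  { unfold y. rewrite pow_add.
    apply (Rmult_le_compat_l (INR s ^ n)) in H1; [|lra].
    replace (INR s ^ n * (INR k / INR s ^ n)) with (INR k) in H1 by (field; lra).
    assert (0 <= INR k) by apply pos_INR. nra. }
  assert (Hy2 : y < INR (k + 1) * INR s ^ m).
  { unfold y. rewrite pow_add.
    apply (Rmult_lt_compat_l (INR s ^ n)) in H2; [|lra].
    replace (INR s ^ n * (INR (k + 1) / INR s ^ n)) with (INR (k + 1)) in H2 by (field; lra).
    nra. }
  destruct (base_Int_part y) as [B1 B2].
  set (z := Int_part y) in *.
  assert (Hz : (0 <= z)%Z).
  { assert (0 <= INR k * INR s ^ m) by (apply Rmult_le_pos; [apply pos_INR|lra]). 
    assert (Hm1 : IZR (-1) < IZR z) by lra. apply lt_IZR in Hm1. lia. }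
  exists (Z.to_nat z). split; [reflexivity|].
  assert (HN : INR (Z.to_nat z) = IZR z) by (rewrite INR_IZR_INZ, Znat.Z2Nat.id; auto).
  rewrite <- pow_INR, <- mult_INR in Hy1, Hy2.
  split.
  - assert (INR (k * s ^ m) < INR (Z.to_nat z + 1)) by (rewrite plus_INR; simpl; lra).
    apply INR_lt in H0. lia.
  - apply INR_lt. lra.
Qed.

Lemma lambda_bound (p s : nat) (A : list nat) : (2 <= s)%nat -> (1 <= p)%nat ->
  List.length A = s -> List.Forall (fun a => (a < p)%nat) A ->
  forall n k x, (1 <= k)%nat -> INR k / INR s ^ n <= x < INR (k + 1) / INR s ^ n -> 0 < x ->
  INR (aseq s p A k) / (INR p ^ n * Rpower x (logsp s p)) <= lambda s p A x <=
  (INR (aseq s p A k) + 1) / (INR p ^ n * Rpower x (logsp s p)).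
Proof.
  intros Hs Hp HL HF n k x Hk Hx Hx0.
  set (X := Rpower x (logsp s p)).
  assert (HX : 0 < X) by (unfold X, Rpower; apply exp_pos).
  assert (HP : 0 < INR p) by (apply lt_0_INR; lia).
  set (u := fun j : nat => areal s p A (INR s ^ j * x) / Rpower (INR s ^ j * x) (logsp s p)).
  set (lo := INR (aseq s p A k) / (INR p ^ n * X)).
  set (hi := (INR (aseq s p A k) + 1) / (INR p ^ n * X)).
  assert (Hm : forall m, lo <= u (n + m)%nat <= hi).
  { intro m.
    destruct (floor_block s Hs n m k x Hx) as [N [HN [B1 B2]]].
    destruct (aseq_block p s A Hs HL HF m k N Hk B1 B2) as [C1 C2].
    apply le_INR in C1. apply lt_INR in C2.
    rewrite mult_INR, pow_INR in C1, C2. rewrite plus_INR in C2. simpl INR in C2.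
    unfold u, areal. rewrite HN. rewrite Rpower_scale by auto. fold X.
    assert (HPm : 0 < INR p ^ m) by (apply pow_lt; lra).
    assert (HPn : 0 < INR p ^ n) by (apply pow_lt; lra).
    rewrite pow_add. unfold lo, hi.
    replace (INR (aseq s p A k) / (INR p ^ n * X)) with
      (INR p ^ m * INR (aseq s p A k) / (INR p ^ n * INR p ^ m * X)) by (field; lra).
    replace ((INR (aseq s p A k) + 1) / (INR p ^ n * X)) with
      (INR p ^ m * (INR (aseq s p A k) + 1) / (INR p ^ n * INR p ^ m * X)) by (field; lra).
    assert (HD : 0 < INR p ^ n * INR p ^ m * X) by (apply Rmult_lt_0_compat; [apply Rmult_lt_0_compat|]; lra).
    unfold Rdiv. split; apply Rmult_le_compat_r; try (left; apply Rinv_0_lt_compat; lra); lra. }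
  assert (Hev1 : eventually (fun j => lo <= u j)).
  { exists n. intros j Hj. replace j with (n + (j - n))%nat by lia. apply Hm. }
  assert (Hev2 : eventually (fun j => u j <= hi)).
  { exists n. intros j Hj. replace j with (n + (j - n))%nat by lia. apply Hm. }
  apply Lim_seq_le_loc in Hev1. apply Lim_seq_le_loc in Hev2.
  rewrite Lim_seq_const in Hev1, Hev2.
  unfold lambda. fold u.
  destruct (Lim_seq u) as [l| |]; simpl in *; try contradiction; lra.
Qed.

Lemma SF_zero_prop (a b : R) (phi : StepFun a b) (eps : posreal) :
  (forall t, Rmin a b <= t <= Rmax a b -> Rabs (phi t - phi t) <= mkStepFun (StepFun_P4 a b 0) t) /\
  Rabs (RiemannInt_SF (mkStepFun (StepFun_P4 a b 0))) < eps.
Proof.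
  split.
  - intros t _. simpl. unfold fct_cte. rewrite Rminus_diag, Rabs_R0. lra.
  - rewrite StepFun_P18. rewrite Rmult_0_l, Rabs_R0. apply cond_pos.
Qed.

Definition SF_pr (a b : R) (phi : StepFun a b) : Riemann_integrable phi a b :=
  fun eps => existT _ phi (exist _ (mkStepFun (StepFun_P4 a b 0)) (SF_zero_prop a b phi eps)).

Lemma SF_RInt (a b : R) (phi : StepFun a b) :
  ex_RInt phi a b /\ RInt phi a b = RiemannInt_SF phi.
Proof.
  split; [apply ex_RInt_Reals_1, SF_pr|].
  rewrite (RInt_Reals _ _ _ (SF_pr a b phi)). unfold RiemannInt.
  destruct (RiemannInt_exists (SF_pr a b phi) RinvN RinvN_cv) as [l Hl].
  apply UL_sequence with (fun N => RiemannInt_SF (phi_sequence RinvN (SF_pr a b phi) N)); [exact Hl|].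
  intros e He. exists 0%nat. intros n _. unfold Rdist. simpl.
  rewrite Rminus_diag, Rabs_R0. exact He.
Qed.

Lemma squeeze (f : R -> R) (a b : R) : a <= b ->
  (forall eps, 0 < eps -> exists l u, ex_RInt l a b /\ ex_RInt u a b /\
     (forall x, a <= x <= b -> l x <= f x <= u x) /\ RInt u a b - RInt l a b < eps) ->
  ex_RInt f a b.
Proof.
  intros Hab H. apply ex_RInt_Reals_1. intro eps.
  assert (He5 : 0 < eps / 5) by (generalize (cond_pos eps); lra).
  destruct (constructive_indefinite_description _ (H _ He5)) as [l Hl0].
  destruct (constructive_indefinite_description _ Hl0) as [u [Hl [Hu [Hlu Hint]]]].
  destruct (ex_RInt_Reals_0 _ _ _ Hl (mkposreal _ He5)) as [phl [psl [Hl1 Hl2]]].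
  destruct (ex_RInt_Reals_0 _ _ _ Hu (mkposreal _ He5)) as [phu [psu [Hu1 Hu2]]].
  simpl in Hl2, Hu2.
  set (L := mkStepFun (StepFun_P28 (-1) phl psl)).
  set (U := mkStepFun (StepFun_P28 1 phu psu)).
  exists L. exists (mkStepFun (StepFun_P28 (-1) U L)).
  rewrite Rmin_left, Rmax_right in Hl1, Hu1 by lra.
  split.
  - intros t Ht. rewrite Rmin_left, Rmax_right in Ht by lra. simpl.
    specialize (Hl1 t Ht). specialize (Hu1 t Ht). specialize (Hlu t Ht).
    apply Rabs_le_between in Hl1. apply Rabs_le_between in Hu1.
    unfold L, U; simpl. apply Rabs_le_between. lra.
  - rewrite StepFun_P30. unfold U, L. rewrite !StepFun_P30.
    destruct (SF_RInt a b phl) as [Ephl Iphl].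
    destruct (SF_RInt a b psl) as [Epsl Ipsl].
    destruct (SF_RInt a b phu) as [Ephu Iphu].
    destruct (SF_RInt a b psu) as [Epsu Ipsu].
    assert (K1 : RInt phu a b <= RInt u a b + RInt psu a b).
    { rewrite <- (RInt_plus (V:=R_CompleteNormedModule)) by auto. apply RInt_le; auto.
      - apply (ex_RInt_plus (V:=R_NormedModule)); auto.
      - intros x Hx. assert (Hx' : Rmin a b <= x <= Rmax a b) by (rewrite Rmin_left, Rmax_right; lra).
        specialize (Hu1 x ltac:(lra)). apply Rabs_le_between in Hu1. simpl. unfold plus; simpl. lra. }
    assert (K2 : RInt u a b <= RInt phu a b + RInt psu a b).
    { rewrite <- (RInt_plus (V:=R_CompleteNormedModule)) by auto. apply RInt_le; auto.
      - apply (ex_RInt_plus (V:=R_NormedModule)); auto.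
      - intros x Hx. specialize (Hu1 x ltac:(lra)). apply Rabs_le_between in Hu1. simpl. unfold plus; simpl. lra. }
    assert (K3 : RInt phl a b <= RInt l a b + RInt psl a b).
    { rewrite <- (RInt_plus (V:=R_CompleteNormedModule)) by auto. apply RInt_le; auto.
      - apply (ex_RInt_plus (V:=R_NormedModule)); auto.
      - intros x Hx. specialize (Hl1 x ltac:(lra)). apply Rabs_le_between in Hl1. simpl. unfold plus; simpl. lra. }
    assert (K4 : RInt l a b <= RInt phl a b + RInt psl a b).
    { rewrite <- (RInt_plus (V:=R_CompleteNormedModule)) by auto. apply RInt_le; auto.
      - apply (ex_RInt_plus (V:=R_NormedModule)); auto.
      - intros x Hx. specialize (Hl1 x ltac:(lra)). apply Rabs_le_between in Hl1. simpl. unfold plus; simpl. lra. }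
    assert (K5 : RInt l a b <= RInt u a b).
    { apply RInt_le; auto. intros x Hx. specialize (Hlu x ltac:(lra)). lra. }
    rewrite Iphl, Ipsl, Iphu, Ipsu in *.
    apply Rabs_def1; apply Rabs_def2 in Hl2; apply Rabs_def2 in Hu2; lra.
Qed.

Fixpoint rsum (g : nat -> R) (N : nat) : R :=
  match N with O => 0 | S n => rsum g n + g n end.

Lemma rsum_le (g h : nat -> R) N : (forall i, (i < N)%nat -> g i <= h i) -> rsum g N <= rsum h N.
Proof.
  induction N; simpl; intros H; [lra|].
  assert (rsum g N <= rsum h N) by (apply IHN; intros; apply H; lia).
  specialize (H N ltac:(lia)). lra.
Qed.

Lemma rsum_const c N : rsum (fun _ => c) N = INR N * c.
Proof. induction N; simpl rsum; [simpl; lra|]. rewrite IHN, S_INR. lra. Qed.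

Lemma rsum_app (g : nat -> R) N M : rsum g (N + M) = rsum g N + rsum (fun i => g (N + i)%nat) M.
Proof.
  induction M; simpl. - rewrite Nat.add_0_r. lra.
  - rewrite Nat.add_succ_r. simpl. rewrite IHM. lra.
Qed.

Lemma rsum_block (g : nat -> R) a b :
  rsum g (a * b) = rsum (fun q => rsum (fun r => g (q * b + r)%nat) b) a.
Proof.
  induction a; simpl; [reflexivity|].
  rewrite Nat.add_comm, rsum_app, IHa. reflexivity.
Qed.

Lemma rsum_shift (g : nat -> R) k0 N : rsum (fun i => g (k0 + i)%nat) N = rsum (fun i => g (k0 + i)%nat) N.
Proof. reflexivity. Qed.

Lemma cyl_sum (g : R -> R) (pt : nat -> R) (b : nat -> R) k0 : forall j,
  (forall i, (i < j)%nat -> ex_RInt g (pt (k0 + i)%nat) (pt (k0 + i + 1)%nat) /\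
        RInt g (pt (k0 + i)%nat) (pt (k0 + i + 1)%nat) <= b i) ->
  ex_RInt g (pt k0) (pt (k0 + j)%nat) /\ RInt g (pt k0) (pt (k0 + j)%nat) <= rsum b j.
Proof.
  induction j as [|j IH]; intros H.
  - rewrite Nat.add_0_r. split; [apply ex_RInt_point|]. rewrite RInt_point. unfold zero; simpl. lra.
  - destruct IH as [E1 I1]; [intros i Hi; apply H; lia|].
    destruct (H j ltac:(lia)) as [E2 I2].
    replace (k0 + S j)%nat with (k0 + j + 1)%nat by lia.
    split; [apply (ex_RInt_Chasles (V:=R_NormedModule)) with (pt (k0 + j)%nat); auto|].
    rewrite <- (RInt_Chasles (V:=R_CompleteNormedModule) g _ (pt (k0 + j)%nat)) by auto.
    simpl. unfold plus; simpl. lra.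
Qed.

Lemma count_window (g : nat -> R) (W : R) (f0 : nat) :
  (forall i, g i = 0 \/ g i = 1) -> 0 <= W ->
  (forall i, g i = 1 -> Rabs (INR i - INR f0) <= W) ->
  forall N, rsum g N <= Rmax 0 (INR N - INR f0 + W) /\ rsum g N <= 2 * W + 1.
Proof.
  intros H01 HW Hw. induction N as [|N IH]; simpl rsum.
  - split; [apply Rmax_l|lra].
  - destruct IH as [IH1 IH2]. rewrite S_INR.
    destruct (H01 N) as [E|E]; rewrite E.
    + split; [|lra]. revert IH1. unfold Rmax.
      destruct (Rle_dec 0 (INR N - INR f0 + W)); destruct (Rle_dec 0 (INR N + 1 - INR f0 + W)); lra.
    + specialize (Hw N E). apply Rabs_le_between in Hw.
      rewrite Rmax_right in IH1 by lra. rewrite Rmax_right by lra. split; lra.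
Qed.

Lemma count_window' (g : nat -> R) (W : R) :
  (forall i, g i = 0 \/ g i = 1) -> 0 <= W ->
  (forall i1 i2, g i1 = 1 -> g i2 = 1 -> Rabs (INR i1 - INR i2) <= W) ->
  forall N, rsum g N <= 2 * W + 1.
Proof.
  intros H01 HW Hw N.
  destruct (classic (exists f0, g f0 = 1)) as [[f0 Hf0]|Hn].
  - apply (count_window g W f0 H01 HW); auto.
  - assert (rsum g N <= rsum (fun _ => 0) N).
    { apply rsum_le. intros i _. destruct (H01 i) as [E|E]; [lra|]. exfalso; eauto. }
    rewrite rsum_const in H. lra.
Qed.

Lemma c_ge1 (s p : nat) : (2 <= s)%nat -> (s < p)%nat -> 1 <= logsp s p.
Proof.
  intros Hs Hsp. unfold logsp.
  assert (1 < INR s) by (apply lt_1_INR; lia).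
  assert (INR s < INR p) by (apply lt_INR; lia).
  assert (0 < ln (INR s)) by (rewrite <- ln_1; apply ln_increasing; lra).
  assert (ln (INR s) < ln (INR p)) by (apply ln_increasing; lra).
  apply (Rmult_le_reg_r (ln (INR s))); auto. field_simplify; lra.
Qed.

Lemma Rpower_pos x y : 0 < Rpower x y.
Proof. unfold Rpower; apply exp_pos. Qed.

Lemma G_growth (s p : nat) : (2 <= s)%nat -> (s < p)%nat -> forall a b, / INR s <= a <= b ->
  INR s / INR p * (b - a) <= Rpower b (logsp s p) - Rpower a (logsp s p).
Proof.
  intros Hs Hsp a b [Ha Hab].
  assert (HS : 1 < INR s) by (apply lt_1_INR; lia).
  assert (HP : INR s < INR p) by (apply lt_INR; lia).
  assert (Hc := c_ge1 s p Hs Hsp). set (c := logsp s p) in *.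
  assert (Ha0 : 0 < a). { assert (0 < / INR s) by (apply Rinv_0_lt_compat; lra). lra. }
  assert (E : forall y, 0 < y -> Rpower y c = Rpower y (c - 1) * y).
  { intros y Hy. rewrite <- (Rpower_1 y) at 3 by auto. rewrite <- Rpower_plus. f_equal; ring. }
  assert (M1 : Rpower a (c - 1) <= Rpower b (c - 1)) by (apply Rle_Rpower_l; lra).
  assert (M2 : INR s / INR p <= Rpower a (c - 1)).
  { assert (HSc : Rpower (INR s) (c - 1) = INR p / INR s).
    { assert (H1 := E (INR s) ltac:(lra)). unfold c in H1 at 1. rewrite Rpower_S_c in H1 by lia.
      fold c in H1. apply (Rmult_eq_reg_r (INR s)); [|lra]. rewrite <- H1. field; lra. }
    assert (H1 : 1 <= Rpower (a * INR s) (c - 1)).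
    { assert (R1 : Rpower 1 (c - 1) = 1) by (unfold Rpower; rewrite ln_1, Rmult_0_r; apply exp_0).
      apply Rle_trans with (Rpower 1 (c - 1)); [right; symmetry; exact R1|].
      apply Rle_Rpower_l; [lra|]. split; [lra|].
      apply (Rmult_le_compat_r (INR s)) in Ha; [|lra]. rewrite Rinv_l in Ha; lra. }
    rewrite <- Rpower_mult_distr in H1 by lra. rewrite HSc in H1.
    apply (Rmult_le_reg_r (INR p / INR s)). { apply Rdiv_lt_0_compat; lra. }
    replace (INR s / INR p * (INR p / INR s)) with 1 by (field; lra). lra. }
  rewrite (E b), (E a) by lra.
  assert (0 <= Rpower a (c - 1)) by (left; apply Rpower_pos).
  nra.
Qed.

Definition Kf (s n : nat) (x : R) : nat := Z.to_nat (Int_part (INR s ^ n * x)).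

Lemma Kf_spec (s n : nat) x : (1 <= s)%nat -> 0 <= x ->
  INR (Kf s n x) <= INR s ^ n * x < INR (Kf s n x) + 1.
Proof.
  intros Hs Hx. unfold Kf.
  assert (0 <= INR s ^ n * x) by (apply Rmult_le_pos; [apply pow_le, pos_INR|lra]).
  destruct (base_Int_part (INR s ^ n * x)) as [B1 B2].
  assert (Hz : (0 <= Int_part (INR s ^ n * x))%Z).
  { assert (Hm1 : IZR (-1) < IZR (Int_part (INR s ^ n * x))) by lra. apply lt_IZR in Hm1. lia. }
  rewrite INR_IZR_INZ, Znat.Z2Nat.id by auto. lra.
Qed.

Lemma Kf_interior (s n k : nat) x : (1 <= s)%nat ->
  INR k / INR s ^ n <= x < INR (k + 1) / INR s ^ n -> Kf s n x = k.
Proof.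
  intros Hs [H1 H2]. unfold Kf.
  assert (Hsn : 0 < INR s ^ n) by (apply pow_lt; apply lt_0_INR; lia).
  rewrite (Int_part_charac _ (Z.of_nat k)). { apply Znat.Nat2Z.id. }
  rewrite <- INR_IZR_INZ. rewrite plus_INR in H2. simpl in H2.
  split.
  - apply (Rmult_le_compat_l (INR s ^ n)) in H1; [|lra].
    replace (INR s ^ n * (INR k / INR s ^ n)) with (INR k) in H1 by (field; lra). lra.
  - apply (Rmult_lt_compat_l (INR s ^ n)) in H2; [|lra].
    replace (INR s ^ n * ((INR k + 1) / INR s ^ n)) with (INR k + 1) in H2 by (field; lra). lra.
Qed.

Definition pt (s n k : nat) : R := INR k / INR s ^ n.
Definition lo (s p : nat) (A : list nat) (n k : nat) : R := INR (aseq s p A k) / INR p ^ n.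
Definition hi (s p : nat) (A : list nat) (n k : nat) : R := (INR (aseq s p A k) + 1) / INR p ^ n.
Definition inb (s p : nat) (A : list nat) (al : R) (n k : nat) : Prop :=
  hi s p A n k <= al * Rpower (pt s n k) (logsp s p).
Definition outb (s p : nat) (A : list nat) (al : R) (n k : nat) : Prop :=
  al * Rpower (pt s n (k + 1)) (logsp s p) < lo s p A n k.

Lemma cyl_of (s n : nat) x : (2 <= s)%nat -> (1 <= n)%nat -> / INR s <= x ->
  (1 <= Kf s n x)%nat /\ pt s n (Kf s n x) <= x < pt s n (Kf s n x + 1).
Proof.
  intros Hs Hn Hx.
  assert (HS : 1 < INR s) by (apply lt_1_INR; lia).
  assert (Hx0 : 0 < x). { assert (0 < / INR s) by (apply Rinv_0_lt_compat; lra). lra. }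
  destruct (Kf_spec s n x ltac:(lia) ltac:(lra)) as [H1 H2].
  set (k := Kf s n x) in *.
  assert (Hsn : 0 < INR s ^ n) by (apply pow_lt; lra).
  split.
  - assert (1 <= INR s ^ n * x).
    { destruct n as [|n']; [lia|]. simpl.
      assert (1 <= INR s ^ n') by (apply pow_R1_Rle; lra).
      apply (Rmult_le_compat_l (INR s)) in Hx; [|lra]. rewrite Rinv_r in Hx by lra. nra. }
    destruct k as [|k']; [simpl in H2; lra|lia].
  - unfold pt. rewrite plus_INR. change (INR 1) with 1. split.
    + apply (Rmult_le_reg_l (INR s ^ n)); auto. replace (INR s ^ n * (INR k / INR s ^ n)) with (INR k) by (field; lra). lra.
    + apply (Rmult_lt_reg_l (INR s ^ n)); auto. replace (INR s ^ n * ((INR k + 1) / INR s ^ n)) with (INR k + 1) by (field; lra). idtac. lra.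
Qed.

Lemma lam_K (p s : nat) (A : list nat) : (2 <= s)%nat -> (s < p)%nat ->
  List.length A = s -> List.Forall (fun a => (a < p)%nat) A ->
  forall n x, (1 <= n)%nat -> / INR s <= x ->
  lo s p A n (Kf s n x) / Rpower x (logsp s p) <= lambda s p A x <=
  hi s p A n (Kf s n x) / Rpower x (logsp s p).
Proof.
  intros Hs Hsp HL HF n x Hn Hx.
  destruct (cyl_of s n x Hs Hn Hx) as [Hk [H1 H2]].
  assert (HS : 1 < INR s) by (apply lt_1_INR; lia).
  assert (Hx0 : 0 < x). { assert (0 < / INR s) by (apply Rinv_0_lt_compat; lra). lra. }
  destruct (lambda_bound p s A Hs ltac:(lia) HL HF n (Kf s n x) x Hk (conj H1 H2) Hx0) as [L1 L2].
  assert (HP : 0 < INR p ^ n) by (apply pow_lt, lt_0_INR; lia).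
  assert (HX := Rpower_pos x (logsp s p)).
  unfold lo, hi. split.
  - eapply Rle_trans; [|exact L1]. right. field. lra.
  - eapply Rle_trans; [exact L2|]. right. field. lra.
Qed.

Lemma in_lam (p s : nat) (A : list nat) (al : R) : (2 <= s)%nat -> (s < p)%nat ->
  List.length A = s -> List.Forall (fun a => (a < p)%nat) A -> 0 < al ->
  forall n x, (1 <= n)%nat -> / INR s <= x ->
  inb s p A al n (Kf s n x) -> lambda s p A x <= al.
Proof.
  intros Hs Hsp HL HF Hal n x Hn Hx Hin.
  destruct (cyl_of s n x Hs Hn Hx) as [Hk [H1 H2]].
  destruct (lam_K p s A Hs Hsp HL HF n x Hn Hx) as [_ L].
  assert (HX := Rpower_pos x (logsp s p)).
  assert (Hpt : 0 < pt s n (Kf s n x)).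
  { unfold pt. apply Rdiv_lt_0_compat; [apply lt_0_INR; lia|apply pow_lt, lt_0_INR; lia]. }
  assert (M : Rpower (pt s n (Kf s n x)) (logsp s p) <= Rpower x (logsp s p)).
  { apply Rle_Rpower_l; [generalize (c_ge1 s p Hs Hsp); lra|lra]. }
  unfold inb in Hin. eapply Rle_trans; [exact L|].
  apply (Rmult_le_reg_r (Rpower x (logsp s p))); auto.
  unfold Rdiv. rewrite Rmult_assoc, Rinv_l by lra. nra.
Qed.

Lemma out_lam (p s : nat) (A : list nat) (al : R) : (2 <= s)%nat -> (s < p)%nat ->
  List.length A = s -> List.Forall (fun a => (a < p)%nat) A -> 0 < al ->
  forall n x, (1 <= n)%nat -> / INR s <= x ->
  outb s p A al n (Kf s n x) -> al < lambda s p A x.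
Proof.
  intros Hs Hsp HL HF Hal n x Hn Hx Hout.
  destruct (cyl_of s n x Hs Hn Hx) as [Hk [H1 H2]].
  destruct (lam_K p s A Hs Hsp HL HF n x Hn Hx) as [L _].
  assert (HX := Rpower_pos x (logsp s p)).
  assert (HS : 1 < INR s) by (apply lt_1_INR; lia).
  assert (Hx0 : 0 < x). { assert (0 < / INR s) by (apply Rinv_0_lt_compat; lra). lra. }
  assert (M : Rpower x (logsp s p) <= Rpower (pt s n (Kf s n x + 1)) (logsp s p)).
  { apply Rle_Rpower_l; [generalize (c_ge1 s p Hs Hsp); lra|lra]. }
  unfold outb in Hout. eapply Rlt_le_trans; [|exact L].
  apply (Rmult_lt_reg_r (Rpower x (logsp s p))); auto.
  unfold Rdiv. rewrite Rmult_assoc, Rinv_l by lra. nra.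
Qed.

Definition lf s p A al n (x : R) : R :=
  if excluded_middle_informative (x < 1 /\ inb s p A al n (Kf s n x)) then / x else 0.
Definition uf s p A al n (x : R) : R :=
  if excluded_middle_informative (x < 1 /\ outb s p A al n (Kf s n x)) then 0 else / x.
Definition wgt s p A al n (k : nat) : R :=
  if excluded_middle_informative (inb s p A al n k \/ outb s p A al n k) then 0 else 1.

Lemma ex_RInt_inv a b : 0 < a <= b -> ex_RInt (fun x => / x) a b.
Proof.
  intros H. apply (ex_RInt_continuous (V:=R_CompleteNormedModule)).
  intros z Hz. rewrite Rmin_left, Rmax_right in Hz by lra. apply continuous_Rinv. lra.
Qed.

Lemma cyl_piece (p s : nat) (A : list nat) (al : R) (n k : nat) :
  (2 <= s)%nat -> (1 <= n)%nat -> (s ^ (n - 1) <= k)%nat -> (k + 1 <= s ^ n)%nat ->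
  ex_RInt (lf s p A al n) (pt s n k) (pt s n (k + 1)) /\
  ex_RInt (uf s p A al n) (pt s n k) (pt s n (k + 1)) /\
  RInt (fun x => lf s p A al n x) (pt s n k) (pt s n (k + 1)) +
  INR s * wgt s p A al n k / INR s ^ n >=
  RInt (fun x => uf s p A al n x) (pt s n k) (pt s n (k + 1)).
Proof.
  intros Hs Hn Hk0n Hkn.
  assert (Hk : (1 <= k)%nat).
  { assert (s ^ (n - 1) <> 0)%nat by (apply Nat.pow_nonzero; lia). lia. }
  assert (HS : 1 < INR s) by (apply lt_1_INR; lia).
  assert (Hsn : 0 < INR s ^ n) by (apply pow_lt; lra).
  assert (Hsn' : INR (k + 1) <= INR s ^ n) by (rewrite <- pow_INR; apply le_INR; lia).
  assert (Hk0 : 1 <= INR k) by (apply (le_INR 1); lia).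
  assert (Hpt : 0 < pt s n k <= pt s n (k + 1)).
  { unfold pt. split. apply Rdiv_lt_0_compat; lra.
    unfold Rdiv. apply Rmult_le_compat_r. left; apply Rinv_0_lt_compat; lra. apply le_INR; lia. }
  assert (Hp1 : pt s n (k + 1) <= 1).
  { unfold pt. apply (Rmult_le_reg_r (INR s ^ n)); auto. field_simplify; lra. }
  assert (Hint : forall x, pt s n k < x < pt s n (k + 1) -> Kf s n x = k /\ x < 1).
  { intros x Hx. split; [apply Kf_interior; [lia|]; unfold pt in Hx; lra|lra]. }
  assert (Hm : forall x, Rmin (pt s n k) (pt s n (k + 1)) < x < Rmax (pt s n k) (pt s n (k + 1)) ->
     pt s n k < x < pt s n (k + 1)).
  { intros x. rewrite Rmin_left, Rmax_right by lra. auto. }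
  assert (EI := ex_RInt_inv _ _ Hpt).
  assert (E0 := ex_RInt_const (V:=R_NormedModule) (pt s n k) (pt s n (k + 1)) 0).
  assert (Hlen : pt s n (k + 1) - pt s n k = / INR s ^ n).
  { unfold pt. rewrite plus_INR. change (INR 1) with 1. field. lra. }
  destruct (classic (inb s p A al n k)) as [Hin|Hin];
  destruct (classic (outb s p A al n k)) as [Hout|Hout].
  -
    assert (El : forall x, pt s n k < x < pt s n (k + 1) -> lf s p A al n x = / x).
    { intros x Hx. destruct (Hint x Hx) as [K1 K2]. unfold lf. rewrite K1.
      destruct (excluded_middle_informative _); tauto. }
    assert (Eu : forall x, pt s n k < x < pt s n (k + 1) -> uf s p A al n x = 0).
    { intros x Hx. destruct (Hint x Hx) as [K1 K2]. unfold uf. rewrite K1.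
      destruct (excluded_middle_informative _); tauto. }
    assert (ELf : ex_RInt (lf s p A al n) (pt s n k) (pt s n (k + 1))).
    { apply (ex_RInt_ext (V:=R_NormedModule) (fun x => / x)); auto. intros x Hx; symmetry; auto. }
    assert (EUf : ex_RInt (uf s p A al n) (pt s n k) (pt s n (k + 1))).
    { apply (ex_RInt_ext (V:=R_NormedModule) (fun _ => 0)); auto. intros x Hx; symmetry; auto. }
    split; [auto|split; [auto|]].
    assert (0 <= RInt (fun x => lf s p A al n x) (pt s n k) (pt s n (k + 1))).
    { apply RInt_ge_0; auto; try lra. intros x Hx. rewrite El by auto. left; apply Rinv_0_lt_compat; lra. }
    assert (RInt (fun x => uf s p A al n x) (pt s n k) (pt s n (k + 1)) <= 0).
    { rewrite (RInt_ext (V:=R_CompleteNormedModule) _ (fun _ => 0)).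
      - rewrite RInt_const. unfold scal; simpl; unfold mult; simpl. lra.
      - intros x Hx; apply Eu; auto. }
    assert (0 <= wgt s p A al n k) by (unfold wgt; destruct (excluded_middle_informative _); lra).
    assert (0 <= INR s * wgt s p A al n k / INR s ^ n).
    { unfold Rdiv. apply Rmult_le_pos; [|left; apply Rinv_0_lt_compat; lra]. apply Rmult_le_pos; lra. }
    lra.
  -
    assert (El : forall x, pt s n k < x < pt s n (k + 1) -> lf s p A al n x = / x).
    { intros x Hx. destruct (Hint x Hx) as [K1 K2]. unfold lf. rewrite K1.
      destruct (excluded_middle_informative _); tauto. }
    assert (Eu : forall x, pt s n k < x < pt s n (k + 1) -> uf s p A al n x = / x).
    { intros x Hx. destruct (Hint x Hx) as [K1 K2]. unfold uf. rewrite K1.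
      destruct (excluded_middle_informative _); tauto. }
    assert (ELf : ex_RInt (lf s p A al n) (pt s n k) (pt s n (k + 1))).
    { apply (ex_RInt_ext (V:=R_NormedModule) (fun x => / x)); auto. intros x Hx; symmetry; auto. }
    assert (EUf : ex_RInt (uf s p A al n) (pt s n k) (pt s n (k + 1))).
    { apply (ex_RInt_ext (V:=R_NormedModule) (fun x => / x)); auto. intros x Hx; symmetry; auto. }
    split; [auto|split; [auto|]].
    rewrite (RInt_ext (V:=R_CompleteNormedModule) (fun x => uf s p A al n x) (fun x => lf s p A al n x)).
    + assert (0 <= wgt s p A al n k) by (unfold wgt; destruct (excluded_middle_informative _); lra).
      assert (0 <= INR s * wgt s p A al n k / INR s ^ n).
      { unfold Rdiv. apply Rmult_le_pos; [|left; apply Rinv_0_lt_compat; lra]. apply Rmult_le_pos; lra. }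
      lra.
    + intros x Hx. rewrite El, Eu; auto.
  -
    assert (El : forall x, pt s n k < x < pt s n (k + 1) -> lf s p A al n x = 0).
    { intros x Hx. destruct (Hint x Hx) as [K1 K2]. unfold lf. rewrite K1.
      destruct (excluded_middle_informative _); tauto. }
    assert (Eu : forall x, pt s n k < x < pt s n (k + 1) -> uf s p A al n x = 0).
    { intros x Hx. destruct (Hint x Hx) as [K1 K2]. unfold uf. rewrite K1.
      destruct (excluded_middle_informative _); tauto. }
    assert (ELf : ex_RInt (lf s p A al n) (pt s n k) (pt s n (k + 1))).
    { apply (ex_RInt_ext (V:=R_NormedModule) (fun _ => 0)); auto. intros x Hx; symmetry; auto. }
    assert (EUf : ex_RInt (uf s p A al n) (pt s n k) (pt s n (k + 1))).
    { apply (ex_RInt_ext (V:=R_NormedModule) (fun _ => 0)); auto. intros x Hx; symmetry; auto. }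
    split; [auto|split; [auto|]].
    rewrite (RInt_ext (V:=R_CompleteNormedModule) (fun x => uf s p A al n x) (fun x => lf s p A al n x)).
    + assert (0 <= wgt s p A al n k) by (unfold wgt; destruct (excluded_middle_informative _); lra).
      assert (0 <= INR s * wgt s p A al n k / INR s ^ n).
      { unfold Rdiv. apply Rmult_le_pos; [|left; apply Rinv_0_lt_compat; lra]. apply Rmult_le_pos; lra. }
      lra.
    + intros x Hx. rewrite El, Eu; auto.
  -
    assert (El : forall x, pt s n k < x < pt s n (k + 1) -> lf s p A al n x = 0).
    { intros x Hx. destruct (Hint x Hx) as [K1 K2]. unfold lf. rewrite K1.
      destruct (excluded_middle_informative _); tauto. }
    assert (Eu : forall x, pt s n k < x < pt s n (k + 1) -> uf s p A al n x = / x).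
    { intros x Hx. destruct (Hint x Hx) as [K1 K2]. unfold uf. rewrite K1.
      destruct (excluded_middle_informative _); tauto. }
    assert (ELf : ex_RInt (lf s p A al n) (pt s n k) (pt s n (k + 1))).
    { apply (ex_RInt_ext (V:=R_NormedModule) (fun _ => 0)); auto. intros x Hx; symmetry; auto. }
    assert (EUf : ex_RInt (uf s p A al n) (pt s n k) (pt s n (k + 1))).
    { apply (ex_RInt_ext (V:=R_NormedModule) (fun x => / x)); auto. intros x Hx; symmetry; auto. }
    split; [auto|split; [auto|]].
    assert (W1 : wgt s p A al n k = 1) by (unfold wgt; destruct (excluded_middle_informative _); tauto).
    rewrite W1.
    rewrite (RInt_ext (V:=R_CompleteNormedModule) (fun x => lf s p A al n x) (fun _ => 0)).
    2: { intros x Hx; apply El; auto. }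
    rewrite RInt_const. unfold scal; simpl; unfold mult; simpl. rewrite Rmult_0_r.
    assert (RInt (fun x => uf s p A al n x) (pt s n k) (pt s n (k + 1)) <=
            RInt (fun _ => INR s) (pt s n k) (pt s n (k + 1))).
    { apply RInt_le; auto; try lra. apply ex_RInt_const.
      intros x Hx. rewrite Eu by auto.
      assert (/ INR s <= x).
      { apply Rle_trans with (pt s n k); [|lra]. unfold pt.
        apply (Rmult_le_reg_r (INR s ^ n)); auto.
        replace (INR k / INR s ^ n * INR s ^ n) with (INR k) by (field; lra).
        destruct n as [|n']; [lia|].
        simpl. replace (/ INR s * (INR s * INR s ^ n')) with (INR s ^ n') by (field; lra).
        rewrite <- pow_INR. apply le_INR. replace n' with (S n' - 1)%nat by lia. auto. }
      rewrite <- (Rinv_inv (INR s)). apply Rinv_le_contravar; [apply Rinv_0_lt_compat; lra|auto]. }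
    rewrite RInt_const in H. unfold scal in H; simpl in H; unfold mult in H; simpl in H.
    rewrite Hlen in H. unfold Rdiv. lra.
Qed.

Lemma pow_mono_nat (s a b : nat) : (1 <= s)%nat -> (a <= b)%nat -> (s ^ a <= s ^ b)%nat.
Proof. intros. apply Nat.pow_le_mono_r; lia. Qed.

Lemma level_n (p s : nat) (A : list nat) (al : R) : (2 <= s)%nat -> (s < p)%nat ->
  List.length A = s -> List.Forall (fun a => (a < p)%nat) A -> 0 < al ->
  forall n, (1 <= n)%nat ->
  ex_RInt (lf s p A al n) (/ INR s) 1 /\ ex_RInt (uf s p A al n) (/ INR s) 1 /\
  (forall x, / INR s <= x <= 1 -> lf s p A al n x <= indic_over_x s p A al x <= uf s p A al n x) /\
  RInt (uf s p A al n) (/ INR s) 1 - RInt (lf s p A al n) (/ INR s) 1 <=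
  rsum (fun i => INR s * wgt s p A al n (s ^ (n - 1) + i)%nat / INR s ^ n) (s ^ n - s ^ (n - 1)).
Proof.
  intros Hs Hsp HL HF Hal n Hn.
  assert (HS : 1 < INR s) by (apply lt_1_INR; lia).
  set (k0 := (s ^ (n - 1))%nat). set (j := (s ^ n - s ^ (n - 1))%nat).
  assert (Hk0 : (k0 <= s ^ n)%nat) by (apply pow_mono_nat; lia).
  assert (E1 : pt s n k0 = / INR s).
  { unfold pt, k0. rewrite pow_INR. destruct n as [|n']; [lia|].
    replace (S n' - 1)%nat with n' by lia. simpl.
    assert (Hp' : INR s ^ n' <> 0) by (apply pow_nonzero; lra). field. split; lra. }
  assert (E2 : pt s n (k0 + j) = 1).
  { unfold pt, j. replace (k0 + (s ^ n - s ^ (n - 1)))%nat with (s ^ n)%nat by (unfold k0; lia).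
    rewrite pow_INR. field. apply pow_nonzero; lra. }
  assert (Hpiece : forall i, (i < j)%nat ->
     ex_RInt (lf s p A al n) (pt s n (k0 + i)) (pt s n (k0 + i + 1)) /\
     ex_RInt (uf s p A al n) (pt s n (k0 + i)) (pt s n (k0 + i + 1)) /\
     RInt (lf s p A al n) (pt s n (k0 + i)) (pt s n (k0 + i + 1)) +
     INR s * wgt s p A al n (k0 + i) / INR s ^ n >=
     RInt (uf s p A al n) (pt s n (k0 + i)) (pt s n (k0 + i + 1))).
  { intros i Hi. apply cyl_piece; auto; unfold j, k0 in *; lia. }
  destruct (cyl_sum (lf s p A al n) (pt s n)
     (fun i => RInt (lf s p A al n) (pt s n (k0 + i)) (pt s n (k0 + i + 1))) k0 j) as [EL _].
  { intros i Hi. destruct (Hpiece i Hi) as [? _]. split; [auto|right; reflexivity]. }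
  destruct (cyl_sum (uf s p A al n) (pt s n)
     (fun i => RInt (uf s p A al n) (pt s n (k0 + i)) (pt s n (k0 + i + 1))) k0 j) as [EU _].
  { intros i Hi. destruct (Hpiece i Hi) as [_ [? _]]. split; [auto|right; reflexivity]. }
  destruct (cyl_sum (fun x => minus (uf s p A al n x) (lf s p A al n x)) (pt s n)
     (fun i => INR s * wgt s p A al n (k0 + i) / INR s ^ n) k0 j) as [_ ED].
  { intros i Hi. destruct (Hpiece i Hi) as [H1 [H2 H3]]. split.
    - apply (ex_RInt_minus (V:=R_NormedModule)); auto.
    - rewrite (RInt_minus (V:=R_CompleteNormedModule)) by auto.
      unfold minus, plus, opp; simpl. lra. }
  rewrite E1, E2 in EL, EU, ED.
  split; [auto|split; [auto|split]].
  - intros x Hx.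
    assert (Hx0 : 0 < x). { assert (0 < / INR s) by (apply Rinv_0_lt_compat; lra). lra. }
    assert (Hix : 0 < / x) by (apply Rinv_0_lt_compat; lra).
    unfold lf, uf, indic_over_x, E_alpha.
    destruct (excluded_middle_informative (x < 1 /\ inb s p A al n (Kf s n x))) as [[Hx1 Hin]|Hnin];
    destruct (excluded_middle_informative (x < 1 /\ outb s p A al n (Kf s n x))) as [[Hx1' Hout]|Hnout];
    destruct (excluded_middle_informative ((/ INR s <= x < 1) /\ lambda s p A x <= al)) as [HE|HnE];
    try lra.
    + assert (al < lambda s p A x) by (apply (out_lam p s A al Hs Hsp HL HF Hal n x Hn); tauto). lra.
    + assert (lambda s p A x <= al) by (apply (in_lam p s A al Hs Hsp HL HF Hal n x Hn); tauto).
      exfalso; apply HnE; split; [lra|auto].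
    + assert (lambda s p A x <= al) by (apply (in_lam p s A al Hs Hsp HL HF Hal n x Hn); tauto).
      exfalso; apply HnE; split; [lra|auto].
    + assert (al < lambda s p A x) by (apply (out_lam p s A al Hs Hsp HL HF Hal n x Hn); tauto). lra.
  - rewrite (RInt_minus (V:=R_CompleteNormedModule)) in ED by auto.
    unfold minus, plus, opp in ED; simpl in ED. exact ED.
Qed.

Lemma window_one (p s : nat) (A : list nat) (al : R) : (2 <= s)%nat -> (s < p)%nat ->
  List.length A = s -> List.Forall (fun a => (a < p)%nat) A -> 0 < al ->
  forall j m Q r1 r2, (1 <= j)%nat -> (s ^ (j - 1) <= Q)%nat ->
  (r1 < s ^ m)%nat -> (r2 < s ^ m)%nat -> (r1 <= r2)%nat ->
  wgt s p A al (j + m) (Q * s ^ m + r1) = 1 -> wgt s p A al (j + m) (Q * s ^ m + r2) = 1 ->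
  INR r2 - INR r1 <= 1 + INR s ^ (j + m) / (al * INR s / INR p * INR p ^ j).
Proof.
  intros Hs Hsp HL HF Hal j m Q r1 r2 Hj HQ Hr1 Hr2 Hr12 W1 W2.
  assert (HS : 1 < INR s) by (apply lt_1_INR; lia).
  assert (HP : INR s < INR p) by (apply lt_INR; lia).
  set (n := (j + m)%nat).
  set (c := logsp s p).
  assert (HQ1 : (1 <= Q)%nat).
  { assert (s ^ (j - 1) <> 0)%nat by (apply Nat.pow_nonzero; lia). lia. }
  assert (Hsm : (1 <= s ^ m)%nat) by (apply Nat.le_succ_l, Nat.neq_0_lt_0, Nat.pow_nonzero; lia).
  assert (HPj : 0 < INR p ^ j) by (apply pow_lt; lra).
  assert (HPm : 0 < INR p ^ m) by (apply pow_lt; lra).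
  assert (HSn : 0 < INR s ^ n) by (apply pow_lt; lra).
  assert (Child : forall r, (r < s ^ m)%nat -> wgt s p A al n (Q * s ^ m + r) = 1 ->
     INR (aseq s p A Q) / INR p ^ j <= al * Rpower (pt s n (Q * s ^ m + r + 1)) c /\
     al * Rpower (pt s n (Q * s ^ m + r)) c < (INR (aseq s p A Q) + 1) / INR p ^ j).
  { intros r Hr Wr. unfold wgt in Wr.
    destruct (excluded_middle_informative _) as [_|Hno]; [lra|].
    assert (Hnin : ~ inb s p A al n (Q * s ^ m + r)) by tauto.
    assert (Hnout : ~ outb s p A al n (Q * s ^ m + r)) by tauto.
    unfold inb, outb, lo, hi in Hnin, Hnout. fold c in Hnin, Hnout.
    apply Rnot_le_lt in Hnin. apply Rnot_lt_le in Hnout.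
    destruct (aseq_block p s A Hs HL HF m Q (Q * s ^ m + r) HQ1 ltac:(lia) ltac:(nia)) as [C1 C2].
    apply le_INR in C1. assert (C2' : (aseq s p A (Q * s ^ m + r) + 1 <= p ^ m * (aseq s p A Q + 1))%nat) by lia.
    apply le_INR in C2'.
    rewrite mult_INR, pow_INR in C1, C2'. rewrite !plus_INR in C2'. change (INR 1) with 1 in C2'.
    unfold n in *. rewrite pow_add in Hnin, Hnout.
    split.
    - eapply Rle_trans; [|exact Hnout].
      apply (Rmult_le_reg_r (INR p ^ j * INR p ^ m)); [apply Rmult_lt_0_compat; lra|].
      replace (INR (aseq s p A Q) / INR p ^ j * (INR p ^ j * INR p ^ m)) with (INR p ^ m * INR (aseq s p A Q)) by (field; lra).
      replace (INR (aseq s p A (Q * s ^ m + r)) / (INR p ^ j * INR p ^ m) * (INR p ^ j * INR p ^ m)) with (INR (aseq s p A (Q * s ^ m + r))) by (field; lra).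
      exact C1.
    - eapply Rlt_le_trans; [exact Hnin|].
      apply (Rmult_le_reg_r (INR p ^ j * INR p ^ m)); [apply Rmult_lt_0_compat; lra|].
      replace ((INR (aseq s p A Q) + 1) / INR p ^ j * (INR p ^ j * INR p ^ m)) with (INR p ^ m * (INR (aseq s p A Q) + 1)) by (field; lra).
      replace ((INR (aseq s p A (Q * s ^ m + r)) + 1) / (INR p ^ j * INR p ^ m) * (INR p ^ j * INR p ^ m)) with (INR (aseq s p A (Q * s ^ m + r)) + 1) by (field; lra).
      exact C2'. }
  destruct (Child r1 Hr1 W1) as [A1 _].
  destruct (Child r2 Hr2 W2) as [_ A2].
  assert (HSn1 : 0 < INR s ^ (n - 1)) by (apply pow_lt; lra).
  destruct (Nat.eq_dec r1 r2) as [->|Hne].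
  - rewrite Rminus_diag. assert (0 <= INR s ^ n / (al * INR s / INR p * INR p ^ j)).
    { unfold Rdiv. apply Rmult_le_pos; [left; apply pow_lt; lra|].
      left; apply Rinv_0_lt_compat. apply Rmult_lt_0_compat; [|lra]. apply Rdiv_lt_0_compat; nra. } lra.
  - set (a := pt s n (Q * s ^ m + r1 + 1)). set (b := pt s n (Q * s ^ m + r2)).
    assert (Ha : / INR s <= a).
    { unfold a, pt. apply (Rmult_le_reg_r (INR s ^ n)); auto.
      replace (INR (Q * s ^ m + r1 + 1) / INR s ^ n * INR s ^ n) with (INR (Q * s ^ m + r1 + 1)) by (field; lra).
      replace n with (S (n - 1)) at 1 by (unfold n; lia). simpl.
      replace (/ INR s * (INR s * INR s ^ (n - 1))) with (INR s ^ (n - 1)) by (field; lra).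
      rewrite <- pow_INR. apply le_INR.
      replace (n - 1)%nat with ((j - 1) + m)%nat by (unfold n; lia). rewrite Nat.pow_add_r. nia. }
    assert (Hab : a <= b).
    { unfold a, b, pt. unfold Rdiv. apply Rmult_le_compat_r; [left; apply Rinv_0_lt_compat; lra|].
      apply le_INR; lia. }
    assert (Gr := G_growth s p Hs Hsp a b (conj Ha Hab)). fold c in Gr.
    assert (Hdiff : b - a = (INR r2 - INR r1 - 1) / INR s ^ n).
    { unfold a, b, pt. rewrite !plus_INR. change (INR 1) with 1. field. lra. }
    assert (Hlt : al * (INR s / INR p) * (b - a) < / INR p ^ j).
    { assert (al * (Rpower b c - Rpower a c) < / INR p ^ j).
      { replace (/ INR p ^ j) with ((INR (aseq s p A Q) + 1) / INR p ^ j - INR (aseq s p A Q) / INR p ^ j) by (field; lra).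
        fold a b in A1, A2. lra. }
      assert (al * (INR s / INR p * (b - a)) <= al * (Rpower b c - Rpower a c)) by (apply Rmult_le_compat_l; lra).
      lra. }
    rewrite Hdiff in Hlt. fold n.
    assert (Hd : 0 < al * INR s / INR p * INR p ^ j) by (apply Rmult_lt_0_compat; [apply Rdiv_lt_0_compat; nra|lra]).
    apply (Rmult_le_reg_r (al * INR s / INR p * INR p ^ j)); auto.
    replace ((1 + INR s ^ n / (al * INR s / INR p * INR p ^ j)) * (al * INR s / INR p * INR p ^ j))
      with (al * INR s / INR p * INR p ^ j + INR s ^ n) by (field; lra).
    apply (Rmult_lt_compat_r (INR p ^ j * INR s ^ n)) in Hlt; [|apply Rmult_lt_0_compat; lra].
    replace (/ INR p ^ j * (INR p ^ j * INR s ^ n)) with (INR s ^ n) in Hlt by (field; lra).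
    replace (al * (INR s / INR p) * ((INR r2 - INR r1 - 1) / INR s ^ n) * (INR p ^ j * INR s ^ n))
      with ((INR r2 - INR r1 - 1) * (al * INR s / INR p * INR p ^ j)) in Hlt by (field; lra).
    nra.
Qed.

Lemma rsum_ext (g h : nat -> R) N : (forall i, (i < N)%nat -> g i = h i) -> rsum g N = rsum h N.
Proof. intros H. apply Rle_antisym; apply rsum_le; intros i Hi; rewrite H; auto; lra. Qed.

Lemma rsum_scal (g : nat -> R) c N : rsum (fun i => c * g i) N = c * rsum g N.
Proof. induction N; simpl; [ring|]. rewrite IHN; ring. Qed.

Lemma wgt01 s p A al n k : wgt s p A al n k = 0 \/ wgt s p A al n k = 1.
Proof. unfold wgt; destruct (excluded_middle_informative _); auto. Qed.

Lemma bound_n (p s : nat) (A : list nat) (al : R) : (2 <= s)%nat -> (s < p)%nat ->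
  List.length A = s -> List.Forall (fun a => (a < p)%nat) A -> 0 < al ->
  forall j m, (1 <= j)%nat ->
  rsum (fun i => INR s * wgt s p A al (j + m) (s ^ (j + m - 1) + i)%nat / INR s ^ (j + m))
       (s ^ (j + m) - s ^ (j + m - 1)) <=
  3 * INR s / INR s ^ m + 2 * INR p / al * (INR s ^ j / INR p ^ j).
Proof.
  intros Hs Hsp HL HF Hal j m Hj.
  assert (HS : 1 < INR s) by (apply lt_1_INR; lia).
  assert (HP : INR s < INR p) by (apply lt_INR; lia).
  set (n := (j + m)%nat).
  set (W := 1 + INR s ^ n / (al * INR s / INR p * INR p ^ j)).
  assert (HPj : 0 < INR p ^ j) by (apply pow_lt; lra).
  assert (HSj : 0 < INR s ^ j) by (apply pow_lt; lra).
  assert (HSm : 0 < INR s ^ m) by (apply pow_lt; lra).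
  assert (Hd : 0 < al * INR s / INR p * INR p ^ j) by (apply Rmult_lt_0_compat; [apply Rdiv_lt_0_compat; nra|lra]).
  assert (HW : 0 <= W).
  { unfold W. assert (0 <= INR s ^ n / (al * INR s / INR p * INR p ^ j)); [|lra].
    unfold Rdiv. apply Rmult_le_pos; [left; apply pow_lt; lra|left; apply Rinv_0_lt_compat; lra]. }
  rewrite (rsum_ext _ (fun i => (INR s / INR s ^ n) * wgt s p A al n (s ^ (n - 1) + i))).
  2: { intros i _. unfold Rdiv. ring. }
  rewrite rsum_scal.
  assert (E1 : (s ^ n - s ^ (n - 1) = (s ^ j - s ^ (j - 1)) * s ^ m)%nat).
  { unfold n. replace (j + m - 1)%nat with (j - 1 + m)%nat by lia. rewrite !Nat.pow_add_r.
    rewrite Nat.mul_sub_distr_r. reflexivity. }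
  assert (E2 : (s ^ (n - 1) = s ^ (j - 1) * s ^ m)%nat).
  { unfold n. replace (j + m - 1)%nat with (j - 1 + m)%nat by lia. apply Nat.pow_add_r. }
  rewrite E1, E2.
  rewrite (rsum_block (fun i => wgt s p A al n (s ^ (j - 1) * s ^ m + i))).
  assert (Inner : forall q, (q < s ^ j - s ^ (j - 1))%nat ->
     rsum (fun r => wgt s p A al n (s ^ (j - 1) * s ^ m + (q * s ^ m + r))) (s ^ m) <= 2 * W + 1).
  { intros q Hq.
    set (Q := (s ^ (j - 1) + q)%nat).
    set (gr := fun r => if lt_dec r (s ^ m) then wgt s p A al n (Q * s ^ m + r) else 0).
    rewrite (rsum_ext _ gr).
    2: { intros r Hr. unfold gr. destruct (lt_dec r (s ^ m)); [|lia]. f_equal. unfold Q. nia. }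
    apply count_window'; auto.
    - intros i. unfold gr. destruct (lt_dec i (s ^ m)); [apply wgt01|auto].
    - intros i1 i2 G1 G2. unfold gr in G1, G2.
      destruct (lt_dec i1 (s ^ m)) as [L1|]; [|lra].
      destruct (lt_dec i2 (s ^ m)) as [L2|]; [|lra].
      assert (HQ : (s ^ (j - 1) <= Q)%nat) by (unfold Q; lia).
      apply Rabs_le. destruct (Nat.le_gt_cases i1 i2) as [Hle|Hlt].
      + assert (X := window_one p s A al Hs Hsp HL HF Hal j m Q i1 i2 Hj HQ L1 L2 Hle G1 G2).
        fold n W in X. assert (INR i1 <= INR i2) by (apply le_INR; lia). split; lra.
      + assert (X := window_one p s A al Hs Hsp HL HF Hal j m Q i2 i1 Hj HQ L2 L1 ltac:(lia) G2 G1).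
        fold n W in X. assert (INR i2 <= INR i1) by (apply le_INR; lia). split; lra. }
  assert (Outer : rsum (fun q => rsum (fun r => wgt s p A al n (s ^ (j - 1) * s ^ m + (q * s ^ m + r))) (s ^ m))
                    (s ^ j - s ^ (j - 1)) <= INR s ^ j * (2 * W + 1)).
  { eapply Rle_trans; [apply rsum_le; exact Inner|]. rewrite rsum_const.
    apply Rmult_le_compat_r; [lra|]. rewrite <- pow_INR. apply le_INR. lia. }
  assert (Hc : 0 < INR s / INR s ^ n) by (apply Rdiv_lt_0_compat; [lra|apply pow_lt; lra]).
  eapply Rle_trans; [apply Rmult_le_compat_l; [lra|exact Outer]|].
  right. unfold W, n. rewrite pow_add. field. repeat split; lra.
Qed.

Lemma hdig_pos (s : nat) (A : list nat) : Sorted Peano.lt A -> List.length A = s ->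
  forall k, (1 <= k)%nat -> (k < s)%nat -> (1 <= hdig A k)%nat.
Proof.
  intros HS HL k Hk1 Hk2. destruct A as [|a0 A']; [simpl in HL; lia|].
  apply Sorted_StronglySorted in HS; [|intros x y z; lia].
  apply StronglySorted_inv in HS. destruct HS as [_ HF].
  unfold hdig. destruct k as [|k']; [lia|]. simpl.
  rewrite Forall_forall in HF. assert (a0 < nth k' A' 0)%nat; [|lia].
  apply HF. apply nth_In. simpl in HL. lia.
Qed.

Lemma lambda_pos (p s : nat) (A : list nat) : (2 <= s)%nat -> (s < p)%nat ->
  Sorted Peano.lt A -> List.length A = s -> List.Forall (fun a => (a < p)%nat) A ->
  forall x, / INR s <= x < 1 -> 0 < lambda s p A x.
Proof.
  intros Hs Hsp HS HL HF x [Hx1 Hx2].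
  destruct (lam_K p s A Hs Hsp HL HF 1 x ltac:(lia) Hx1) as [L _].
  destruct (cyl_of s 1 x Hs ltac:(lia) Hx1) as [Hk [H1 H2]].
  set (k := Kf s 1 x) in *.
  assert (HS1 : 1 < INR s) by (apply lt_1_INR; lia).
  assert (Hks : (k < s)%nat).
  { apply INR_lt. unfold pt in H1. simpl in H1. rewrite Rmult_1_r in H1.
    apply (Rmult_le_compat_r (INR s)) in H1; [|lra]. replace (INR k / INR s * INR s) with (INR k) in H1 by (field; lra). nra. }
  assert (Ha : (1 <= aseq s p A k)%nat) by (rewrite aseq_small by lia; apply (hdig_pos s); auto).
  apply le_INR in Ha. simpl INR at 1 in Ha.
  eapply Rlt_le_trans; [|exact L]. unfold lo. apply Rdiv_lt_0_compat; [|apply Rpower_pos].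
  apply Rdiv_lt_0_compat; [lra|apply pow_lt, lt_0_INR; lia].
Qed.

Theorem mainTheorem14 (p s : nat) (A : list nat)
  (Hp : (3 <= p)%nat) (Hs2 : (2 <= s)%nat) (Hsp : (s < p)%nat)
  (HAsorted : Sorted Peano.lt A) (HAlen : List.length A = s)
  (HAbound : List.Forall (fun a => (a < p)%nat) A)
  (alpha : R)
  (Halpha : Rbar_le (mInf s p A) (Finite alpha) /\ Rbar_le (Finite alpha) (MSup s p A)) :
  ex_RInt (indic_over_x s p A alpha) (/ INR s) 1.
Proof.
  assert (HS : 1 < INR s) by (apply lt_1_INR; lia).
  assert (HP : INR s < INR p) by (apply lt_INR; lia).
  assert (HSi : / INR s < 1) by (rewrite <- Rinv_1; apply Rinv_lt_contravar; lra).
  destruct (Rle_or_lt alpha 0) as [Hal|Hal].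
  - apply (ex_RInt_ext (V:=R_NormedModule) (fun _ => 0)); [|apply ex_RInt_const].
    intros x Hx. rewrite Rmin_left, Rmax_right in Hx by lra.
    unfold indic_over_x. destruct (excluded_middle_informative _) as [[HE1 HE2]|]; [|reflexivity].
    assert (0 < lambda s p A x) by (apply (lambda_pos p s A); auto). lra.
  - apply squeeze; [lra|]. intros eps Heps.
    assert (Hr1 : Rabs (INR s / INR p) < 1).
    { rewrite Rabs_right by (left; apply Rdiv_lt_0_compat; lra).
      apply (Rmult_lt_reg_r (INR p)); [lra|]. field_simplify; lra. }
    assert (Hr2 : Rabs (/ INR s) < 1).
    { rewrite Rabs_right by (left; apply Rinv_0_lt_compat; lra). auto. }
    destruct (pow_lt_1_zero _ Hr1 (eps * alpha / (4 * INR p))) as [N1 HN1].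
    { apply Rdiv_lt_0_compat; nra. }
    destruct (pow_lt_1_zero _ Hr2 (eps / (6 * INR s))) as [N2 HN2].
    { apply Rdiv_lt_0_compat; nra. }
    set (j := S N1). set (m := N2).
    specialize (HN1 j ltac:(unfold j; lia)). specialize (HN2 m ltac:(unfold m; lia)).
    assert (E1 : (INR s / INR p) ^ j = INR s ^ j / INR p ^ j).
    { unfold Rdiv. rewrite Rpow_mult_distr, pow_inv. reflexivity. }
    assert (E2 : (/ INR s) ^ m = / INR s ^ m) by apply pow_inv.
    rewrite E1, Rabs_right in HN1 by (left; apply Rdiv_lt_0_compat; apply pow_lt; lra).
    rewrite E2, Rabs_right in HN2 by (left; apply Rinv_0_lt_compat, pow_lt; lra).
    destruct (level_n p s A alpha Hs2 Hsp HAlen HAbound Hal (j + m) ltac:(unfold j; lia))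
      as [EL [EU [Hlu Hint]]].
    assert (B := bound_n p s A alpha Hs2 Hsp HAlen HAbound Hal j m ltac:(unfold j; lia)).
    exists (lf s p A alpha (j + m)), (uf s p A alpha (j + m)).
    split; [auto|split; [auto|split; [auto|]]].
    assert (T1 : 3 * INR s / INR s ^ m < eps / 2).
    { replace (3 * INR s / INR s ^ m) with (3 * INR s * / INR s ^ m) by (unfold Rdiv; ring).
      apply (Rmult_lt_compat_l (3 * INR s)) in HN2; [|lra].
      replace (3 * INR s * (eps / (6 * INR s))) with (eps / 2) in HN2 by (field; lra). lra. }
    assert (T2 : 2 * INR p / alpha * (INR s ^ j / INR p ^ j) < eps / 2).
    { apply (Rmult_lt_compat_l (2 * INR p / alpha)) in HN1; [|apply Rdiv_lt_0_compat; lra].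
      replace (2 * INR p / alpha * (eps * alpha / (4 * INR p))) with (eps / 2) in HN1 by (field; lra). lra. }
    lra.
Qed.
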